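(* Let $G$ be an $X-Y$ normalized graph, let $S \subseteq N(X)$, and assume that no vertex of $S$ is adjacent to a vertex of $Y$. Then there is $S' \subseteq S$ such that $|S'| \leq CE(S)$ and $K(S')=K(S)$.
   Context: $G$ is a finite undirected graph and $X,Y$ are disjoint subsets of $V(G)$; $N(C)=(\bigcup_{v\in C}N(v))\setminus C$. An $X-Y$ separator is a set $K \subseteq V(G) \setminus (X \cup Y)$ such that $G \setminus K$ has no path from $X$ to $Y$; minimal means inclusion-minimal. $G$ is $X-Y$ normalized if $N(X)$ is the only minimum-cardinality $X-Y$ separator. Let $r$ be the minimum size of an $X-Y$ separator; the excess of an $X-Y$ separator $K$ is $|K|-r$. For $S\subseteq N(X)$, the cover excess $CE(S)$ is the excess of a smallest $X-Y$ separator disjoint with $S$. An $X-Y$ separator $K$ with $K\cap S=\emptyset$ and excess $CE(S)$ is a witness of $S$. $NR(G,Y,K)$ is the set of vertices not reachable from $Y$ in $G\setminus K$; $K \geq K'$ means $NR(G,Y,K)\supseteq NR(G,Y,K')$, and $K'<K$ means $K\geq K'$ and $NR(G,Y,K)\ne NR(G,Y,K')$. A minimal $X-Y$ separator $K$ is important if there is no $X-Y$ separator $K'$ with $K<K'$ and $|K|\geq|K'|$. An important witness of $S$ is a witness of $S$ that is an important $X-Y$ separator; for $S\subseteq N(X)$ not adjacent to $Y$ it exists and is unique, denoted $K(S)$. *)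

(* Defs.v *)
From mathcomp Require Import all_boot.
Set Implicit Arguments. Unset Strict Implicit. Unset Printing Implicit Defensive.

(* A finite undirected graph: vertex type T, adjacency e (assumed symmetric
   and irreflexive in the theorem), X Y disjoint vertex sets. *)
Section Separators.
Variables (T : finType) (e : rel T) (X Y : {set T}).

Definition nbr (v : T) : {set T} := [set u | e v u].
Definition nbrs (C : {set T}) : {set T} := (\bigcup_(v in C) nbr v) :\: C.

Definition erem (K : {set T}) : rel T :=
  [rel u v | [&& e u v, u \notin K & v \notin K]].

(* v is reachable from u in G \ K (u itself must be a vertex of G \ K) *)
Definition reach (K : {set T}) (u v : T) : bool :=
  (u \notin K) && connect (erem K) u v.

Definition separator (K : {set T}) : bool :=
  (K \subset ~: (X :|: Y)) &&
  [forall x in X, forall y in Y, ~~ reach K x y].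

Definition minimal_separator (K : {set T}) : bool :=
  separator K && [forall K' : {set T}, (K' \proper K) ==> ~~ separator K'].

(* r = minimum size of an X-Y separator (default #|T| if none exists) *)
Definition rmin : nat :=
  \big[minn/#|T|]_(K : {set T} | separator K) #|K|.

Definition excess (K : {set T}) : nat := #|K| - rmin.

Definition normalized : bool :=
  [forall K : {set T}, (separator K && (#|K| == rmin)) == (K == nbrs X)].

Definition CE (S : {set T}) : nat :=
  (\big[minn/#|T|]_(K : {set T} | separator K && [disjoint K & S]) #|K|) - rmin.

Definition witness (S K : {set T}) : bool :=
  [&& separator K, [disjoint K & S] & excess K == CE S].

Definition NR (K : {set T}) : {set T} :=
  [set v | ~~ [exists y in Y, reach K y v]].

Definition sep_le (K K' : {set T}) : bool := NR K \subset NR K'.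
Definition sep_lt (K K' : {set T}) : bool := sep_le K K' && (NR K != NR K').

Definition important (K : {set T}) : bool :=
  minimal_separator K &&
  [forall K' : {set T}, ~~ [&& separator K', sep_lt K K' & #|K'| <= #|K|]].

Definition important_witness (S K : {set T}) : bool :=
  witness S K && important K.

(* K(S): the (unique, when S is not adjacent to Y) important witness of S *)
Definition Kof (S : {set T}) : option {set T} :=
  [pick K : {set T} | important_witness S K].

End Separators.

(* Main.v *)
Require Import Defs.
From mathcomp Require Import all_boot zify.
Set Implicit Arguments. Unset Strict Implicit. Unset Printing Implicit Defensive.

Section G.
Variables (T : finType) (e : rel T) (X Y : {set T}).
Hypothesis e_sym : symmetric e.
Hypothesis XY : [disjoint X & Y].
Implicit Types (S K C : {set T}).

Local Notation sep := (separator e X Y).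
Local Notation N := (nbrs e).
Definition Wset (K : {set T}) := ~: NR e Y K.

Lemma conn_closed (r : rel T) (P : pred T) x y : P x ->
  (forall u v, P u -> r u v -> P v) -> connect r x y -> P y.
Proof.
move=> Px Hs /connectP [p pth ->]; elim: p x Px pth => //= a p IH x Px /andP [h pth].
exact: IH (Hs _ _ Px h) pth.
Qed.

Lemma erem_sym K : symmetric (erem e K).
Proof. by move=> u v; rewrite /erem /= e_sym; case: (u \in K); case: (v \in K); rewrite ?andbF. Qed.

Lemma conn_sym K u v : connect (erem e K) u v = connect (erem e K) v u.
Proof. exact: (sym_connect_sym (erem_sym K)). Qed.

Lemma reach_notin K y v : reach e K y v -> v \notin K.
Proof.
case/andP => yK; apply: (conn_closed (P := fun v => v \notin K)) => // u w _.
by case/and3P.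
Qed.

Lemma inW K v : (v \in Wset K) = [exists y in Y, reach e K y v].
Proof. by rewrite /Wset /NR !inE negbK. Qed.

Lemma W_notin K v : v \in Wset K -> v \notin K.
Proof. by rewrite inW => /existsP [y /andP [_ /reach_notin]]. Qed.

Lemma in_nbrs (C : {set T}) v : reflect (v \notin C /\ exists2 u, u \in C & e u v) (v \in N C).
Proof.
rewrite /nbrs !inE; apply: (iffP andP) => [[H1 /bigcupP [u uC]]|[H1 [u uC euv]]].
  by rewrite inE => h; split => //; exists u.
by split => //; apply/bigcupP; exists u => //; rewrite inE.
Qed.

Lemma sepX K x : sep K -> x \in X -> x \notin K.
Proof.
case/andP => /subsetP H _ xX; apply/negP => /H; by rewrite !inE xX.
Qed.

Lemma sepY K y : sep K -> y \in Y -> y \notin K.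
Proof.
case/andP => /subsetP H _ yY; apply/negP => /H; by rewrite !inE yY orbT.
Qed.

Lemma F1 K x : sep K -> x \in X -> x \notin Wset K.
Proof.
move=> sK xX; rewrite inW; apply/existsP => [[y /andP [yY /andP [yK c]]]].
case/andP: (sK) => _ /forallP /(_ x) /implyP /(_ xX) /forallP /(_ y) /implyP /(_ yY).
by rewrite /reach (sepX sK xX) conn_sym c.
Qed.

Lemma F3 K y : sep K -> y \in Y -> y \in Wset K.
Proof.
move=> sK yY; rewrite inW; apply/existsP; exists y; rewrite yY /reach (sepY sK yY).
exact: connect0.
Qed.

Lemma F2 K : N (Wset K) \subset K.
Proof.
apply/subsetP => v /in_nbrs [vW [u uW euv]].
apply/negPn/negP => vK; move: vW; rewrite inW; apply/negP/negPn.
move: uW; rewrite inW => /existsP [y /andP [yY /andP [yK c]]].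
apply/existsP; exists y; rewrite yY /reach yK /=.
have uK : u \notin K by apply: (reach_notin (y := y)); rewrite /reach yK c.
apply: (connect_trans c); apply: connect1.
by rewrite /erem /= euv vK uK.
Qed.

Lemma reach_mono (K1 K2 : {set T}) u v : K1 \subset K2 -> reach e K2 u v -> reach e K1 u v.
Proof.
move=> /subsetP s /andP [uK c].
have nK x : x \notin K2 -> x \notin K1 by move=> h; apply/negP => /s; rewrite (negbTE h).
rewrite /reach nK //=.
apply: connect_sub c => a b /and3P [h1 h2 h3]; apply: connect1.
by rewrite /erem /= h1 !nK.
Qed.

Lemma F4 (C : {set T}) : (forall y, y \in Y -> y \in C) -> (forall x, x \in X -> x \notin C) ->
  (forall x, x \in X -> x \notin N C) -> sep (N C) /\ Wset (N C) \subset C.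
Proof.
move=> HY HX HN.
have cl c v : c \in C -> connect (erem e (N C)) c v -> v \in C.
  move=> cC; apply: (conn_closed (P := fun v => v \in C)) => // u w uC /and3P [euw _ wN].
  apply/negPn/negP => wC; move: wN; apply/negP/negPn; apply/in_nbrs; split => //; by exists u.
split.
  apply/andP; split.
    apply/subsetP => v vN; rewrite !inE negb_or; apply/andP; split.
      by apply/negP => /HN; rewrite vN.
    apply/negP => /HY vC; by case/in_nbrs: vN; rewrite vC.
  apply/forallP => x; apply/implyP => xX; apply/forallP => y; apply/implyP => yY.
  apply/negP => /andP [_ c]; rewrite conn_sym in c.
  by have := cl _ _ (HY _ yY) c; rewrite (negbTE (HX _ xX)).
apply/subsetP => v; rewrite inW => /existsP [y /andP [yY /andP [_ c]]].
exact: cl (HY _ yY) c.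
Qed.

Lemma submod (A B : {set T}) : #|N (A :&: B)| + #|N (A :|: B)| <= #|N A| + #|N B|.
Proof.
have H1 : N (A :&: B) \subset N A :|: N B.
  apply/subsetP => v /in_nbrs [vAB [u uAB euv]]; move: uAB; rewrite inE => /andP [uA uB].
  rewrite inE; case vA: (v \in A).
    have vB : v \notin B by move: vAB; rewrite inE vA.
    by apply/orP; right; apply/in_nbrs; split => //; exists u.
  by apply/orP; left; apply/in_nbrs; rewrite vA; split => //; exists u.
have H2 : N (A :|: B) \subset N A :|: N B.
  apply/subsetP => v /in_nbrs [vAB [u uAB euv]]; move: vAB; rewrite inE negb_or => /andP [vA vB].
  rewrite inE; move: uAB; rewrite inE => /orP [uA|uB].
    by apply/orP; left; apply/in_nbrs; split => //; exists u.
  by apply/orP; right; apply/in_nbrs; split => //; exists u.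
have H3 : N (A :&: B) :&: N (A :|: B) \subset N A :&: N B.
  apply/subsetP => v; rewrite inE => /andP [/in_nbrs [_ [u uAB euv]] /in_nbrs [vAB _]].
  case/setIP: uAB => uA uB.
  have vA : v \notin A by apply/negP => h; move: vAB; rewrite inE h.
  have vB : v \notin B by apply/negP => h; move: vAB; rewrite inE h orbT.
  apply/setIP; split; apply/in_nbrs; split => //; by exists u.
rewrite -cardsUI -(cardsUI (N A)); apply: leq_add; apply: subset_leq_card => //.
by rewrite subUset H1 H2.
Qed.


Lemma disjI (A B : {set T}) : (forall x, x \in A -> x \in B -> False) -> [disjoint A & B].
Proof. move=> H; apply/pred0P => x /=; apply/negP => /andP [h1 h2]; exact: H h1 h2. Qed.

Lemma sub_nbrs_I (A B : {set T}) : N (A :&: B) \subset N A :|: N B.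
Proof.
apply/subsetP => v /in_nbrs [vAB [u uAB euv]]; move: uAB; rewrite inE => /andP [uA uB].
rewrite inE; case vA: (v \in A).
  have vB : v \notin B by move: vAB; rewrite inE vA.
  by apply/orP; right; apply/in_nbrs; split => //; exists u.
by apply/orP; left; apply/in_nbrs; rewrite vA; split => //; exists u.
Qed.

Lemma sub_nbrs_U (A B : {set T}) : N (A :|: B) \subset N A :|: N B.
Proof.
apply/subsetP => v /in_nbrs [vAB [u uAB euv]]; move: vAB; rewrite inE negb_or => /andP [vA vB].
rewrite inE; move: uAB; rewrite inE => /orP [uA|uB].
  by apply/orP; left; apply/in_nbrs; split => //; exists u.
by apply/orP; right; apply/in_nbrs; split => //; exists u.
Qed.

Lemma bigmin_le (P : pred {set T}) K : P K -> \big[minn/#|T|]_(K | P K) #|K| <= #|K|.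
Proof.
move=> PK; have : K \in index_enum {set T} by rewrite mem_index_enum.
elim: (index_enum {set T}) => //= a r IH; rewrite inE big_cons; case/orP => [/eqP <-|Kr].
  by rewrite PK geq_minl.
case: (P a); last exact: IH.
exact: leq_trans (geq_minr _ _) (IH Kr).
Qed.

Lemma bigmin_ex (P : pred {set T}) K0 : P K0 ->
  exists2 K, P K & \big[minn/#|T|]_(K | P K) #|K| = #|K|.
Proof.
move=> PK0.
pose Q n := (n == #|T|) || [exists K, P K && (n == #|K|)].
have : Q (\big[minn/#|T|]_(K | P K) #|K|).
  apply: (big_ind Q); first by rewrite /Q eqxx.
    move=> x y Qx Qy; rewrite /minn; by case: ifP.
  by move=> K PK; apply/orP; right; apply/existsP; exists K; rewrite PK eqxx.
case/orP => [/eqP H|/existsP [K /andP [PK /eqP H]]]; last by exists K.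
exists K0 => //; apply/eqP; rewrite eqn_leq bigmin_le //= H; exact: max_card.
Qed.

Definition m (S : {set T}) :=
  \big[minn/#|T|]_(K : {set T} | sep K && [disjoint K & S]) #|K|.

Lemma m_le S K : sep K -> [disjoint K & S] -> m S <= #|K|.
Proof. move=> h1 h2; rewrite /m; apply: (bigmin_le (P := fun K => sep K && [disjoint K & S])); by rewrite h1. Qed.

Lemma m_ex S : (exists K, sep K && [disjoint K & S]) ->
  exists K, [/\ sep K, [disjoint K & S] & m S = #|K|].
Proof.
case=> K0 H0; have [K /andP [h1 h2] h3] := bigmin_ex (P := fun K => sep K && [disjoint K & S]) H0.
by exists K.
Qed.

Lemma rmin_le K : sep K -> rmin e X Y <= #|K|.
Proof. move=> h; rewrite /rmin; exact: (bigmin_le (P := fun K => sep K)). Qed.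

Definition hasSep S := exists K, sep K && [disjoint K & S].

Lemma witnessE S K : hasSep S ->
  witness e X Y S K = [&& sep K, [disjoint K & S] & #|K| == m S].
Proof.
move=> /m_ex [K0 [s0 d0 h0]]; rewrite /witness /excess /CE -/(m S).
case sK: (sep K); case dK: [disjoint K & S] => //=.
have h1 := rmin_le s0; have h2 := rmin_le sK; have h3 := m_le sK dK.
by apply/eqP/eqP; lia.
Qed.

Lemma reach_step K y u v : reach e K y u -> e u v -> v \notin K -> reach e K y v.
Proof.
move=> r euv vK; have uK := reach_notin r; case/andP: r => yK c.
rewrite /reach yK /=; apply: (connect_trans c); apply: connect1; by rewrite /erem /= euv uK vK.
Qed.

Lemma NRW K : NR e Y K = ~: Wset K.
Proof. by rewrite /Wset setCK. Qed.

Lemma sepNW K : sep K -> sep (N (Wset K)) /\ Wset (N (Wset K)) = Wset K.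
Proof.
move=> sK.
have h3 : forall x, x \in X -> x \notin N (Wset K).
  move=> x xX; apply/negP => /(subsetP (F2 K)); by rewrite (negbTE (sepX sK xX)).
have [h1 h2] := F4 (C := Wset K) (fun y => F3 (y:=y) sK) (fun x => F1 (x:=x) sK) h3.
split => //; apply/eqP; rewrite eqEsubset h2 /=; apply/subsetP => v.
rewrite !inW => /existsP [y /andP [yY r]]; apply/existsP; exists y.
by rewrite yY (reach_mono (F2 K) r).
Qed.

Lemma IW_ex S : S \subset N X -> hasSep S -> exists K, important_witness e X Y S K.
Proof.
move=> HS hex; have [K0 [s0 d0 h0]] := m_ex hex.
have w0 : witness e X Y S K0 by rewrite witnessE // s0 d0 h0 eqxx.
case: (arg_maxnP (fun K => #|NR e Y K|) w0) => K wK maxK.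
exists K; move: (wK); rewrite witnessE // => /and3P [sK dK /eqP hK].
rewrite /important_witness wK /important /minimal_separator sK /=.
apply/andP; split.
  apply/forallP => K'; apply/implyP => pK'; apply/negP => sK'.
  have dK' : [disjoint K' & S] by apply: disjointWl dK; exact: proper_sub pK'.
  by have := leq_ltn_trans (m_le sK' dK') (proper_card pK'); rewrite hK ltnn.
apply/forallP => K'; apply/negP => /and3P [sK' /andP [le ne] cK'].
have [sK'' WK''] := sepNW sK'.
have WK'K : Wset K' \subset Wset K by rewrite /Wset setCS.
have dK'' : [disjoint N (Wset K') & S].
  apply: disjI => s /in_nbrs [_ [u uW eus]] sS.
  have [x xX exs] : exists2 x, x \in X & e x s.
    by have /in_nbrs [_ [x ? ?]] := subsetP HS s sS; exists x.
  have := F1 sK xX; rewrite inW; apply/negP/negPn.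
  move: (subsetP WK'K u uW); rewrite inW => /existsP [y /andP [yY r]].
  apply/existsP; exists y; rewrite yY; apply: (reach_step (u := s)).
    by apply: (reach_step r eus); rewrite (disjointFl dK sS).
  by rewrite e_sym. by rewrite (sepX sK xX).
have cK'' : #|N (Wset K')| <= #|K'| by apply: subset_leq_card; exact: F2.
have w'' : witness e X Y S (N (Wset K')).
  rewrite witnessE // sK'' dK'' /=; apply/eqP; apply/eqP; rewrite eqn_leq (m_le sK'' dK'') andbT -hK; exact: leq_trans cK'' cK'.
have E : NR e Y (N (Wset K')) = NR e Y K'.
  by rewrite -[LHS]setCK -[RHS]setCK; congr (~: _); exact: WK''.
have := maxK _ w''; rewrite E.
have : NR e Y K \proper NR e Y K' by rewrite properEneq ne; exact: le.
move/proper_card => lt ge; by move: (leq_trans lt ge); rewrite ltnn.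
Qed.

Lemma KNW K : minimal_separator e X Y K -> K = N (Wset K).
Proof.
case/andP => sK /forallP minK; have [sN _] := sepNW sK.
apply/eqP; rewrite eq_sym eqEproper F2 /=; apply/negP => pr.
by have := minK (N (Wset K)); rewrite pr sN.
Qed.

Lemma IW_half S K1 K2 : important_witness e X Y S K1 -> important_witness e X Y S K2 ->
  Wset K1 \subset Wset K2.
Proof.
move=> H1 H2.
have hex : hasSep S.
  by move: H1 => /andP [/and3P [s1 d1 _] _]; exists K1; rewrite s1 d1.
move: H1 H2; rewrite /important_witness !witnessE //.
case/andP => /and3P [s1 d1 /eqP c1] /andP [m1 /forallP imp1].
case/andP => /and3P [s2 d2 /eqP c2] /andP [m2 _].
set W1 := Wset K1; set W2 := Wset K2.
have E1 := KNW m1; have E2 := KNW m2.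
have NK : forall A, N A \subset N W1 :|: N W2 -> N A \subset K1 :|: K2.
  by move=> A h; rewrite E1 E2 -/W1 -/W2.
have hA := NK _ (sub_nbrs_I W1 W2); have hB := NK _ (sub_nbrs_U W1 W2).
have goodX : forall A, N A \subset K1 :|: K2 -> forall x, x \in X -> x \notin N A.
  move=> A h x xX; apply/negP => /(subsetP h); rewrite inE (negbTE (sepX s1 xX)).
  by rewrite (negbTE (sepX s2 xX)).
have dS : forall A, N A \subset K1 :|: K2 -> [disjoint N A & S].
  move=> A h; apply: disjI => v /(subsetP h); rewrite inE => /orP [] vK vS.
    by rewrite (disjointFr d1 vK) in vS.
  by rewrite (disjointFr d2 vK) in vS.
have [sA WA] := F4 (C := W1 :&: W2)
  (fun y yY => (introT (setIP) (conj (F3 s1 yY) (F3 s2 yY))))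
  (fun x xX => (introN (setIP) (fun h => (elimN idP (F1 s1 xX)) (proj1 h)))) (goodX _ hA).
have [sB _] := F4 (C := W1 :|: W2)
  (fun y yY => (introT (setUP) (or_introl (F3 s1 yY))))
  (fun x xX => (introN (setUP) (fun h => match h with or_introl h => (elimN idP (F1 s1 xX)) h
     | or_intror h => (elimN idP (F1 s2 xX)) h end))) (goodX _ hB).
have mA := m_le sA (dS _ hA); have mB := m_le sB (dS _ hB).
have sm := submod W1 W2; rewrite -E1 -E2 c1 c2 in sm.
have cA : #|N (W1 :&: W2)| <= #|K1|.
  rewrite c1; move: sm mB; clear; lia.
have := imp1 (N (W1 :&: W2)); rewrite sA cA andbT /sep_lt /sep_le.
have le : NR e Y K1 \subset NR e Y (N (W1 :&: W2)).
  by rewrite !NRW setCS (subset_trans WA) // subsetIl.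
rewrite le /= negbK => /eqP EQ.
have : Wset K1 = Wset (N (W1 :&: W2)) by rewrite /Wset EQ.
move=> EW; rewrite -/W1 in EW; by rewrite EW (subset_trans WA) // subsetIr.
Qed.

Lemma IW_uniq S K1 K2 : important_witness e X Y S K1 -> important_witness e X Y S K2 ->
  K1 = K2.
Proof.
move=> H1 H2; have W12 := IW_half H1 H2; have W21 := IW_half H2 H1.
have m1 : minimal_separator e X Y K1 by case/andP: H1 => _ /andP [].
have m2 : minimal_separator e X Y K2 by case/andP: H2 => _ /andP [].
rewrite (KNW m1) (KNW m2); congr (N _); apply/eqP; by rewrite eqEsubset W12 W21.
Qed.

Lemma Kof_eq S K : important_witness e X Y S K -> Kof e X Y S = Some K.
Proof.
move=> H; rewrite /Kof; case: pickP => [K' H'|H0]; last by rewrite H0 in H.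
by rewrite (IW_uniq H' H).
Qed.

Lemma sep_avoid S0 : sep (N X) -> S0 \subset N X ->
  (forall s y, s \in S0 -> y \in Y -> ~~ e s y) -> hasSep S0.
Proof.
move=> sNX HS HSY.
pose C := [set v | (v \notin X :|: S0) && ~~ [exists u in X :|: S0, e u v]].
have HY : forall y, y \in Y -> y \in C.
  move=> y yY; rewrite inE; apply/andP; split.
    rewrite inE negb_or; apply/andP; split.
      by apply/negP => yX; rewrite (disjointFr XY yX) in yY.
    by apply/negP => /(subsetP HS) yN; rewrite (negbTE (sepY sNX yY)) in yN.
  apply/negP => /existsP [u /andP [uXS euy]]; move: uXS; rewrite inE => /orP [uX|uS].
    have : y \in N X.
      apply/in_nbrs; split; last by exists u.
      by apply/negP => yX; rewrite (disjointFr XY yX) in yY.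
    by rewrite (negbTE (sepY sNX yY)).
  by have := HSY u y uS yY; rewrite euy.
have HX : forall x, x \in X -> x \notin C.
  by move=> x xX; rewrite inE inE xX.
have HN : forall x, x \in X -> x \notin N C.
  move=> x xX; apply/negP => /in_nbrs [_ [u uC eux]]; move: uC; rewrite inE => /andP [_].
  by move/negP; apply; apply/existsP; exists x; rewrite inE xX /= e_sym.
have [sC _] := F4 HY HX HN.
exists (N C); rewrite sC /=; apply: disjI => s /in_nbrs [_ [u uC eus]] sS.
move: uC; rewrite inE => /andP [_] /negP; apply; apply/existsP; exists s.
by rewrite inE sS orbT e_sym.
Qed.

Lemma m_mono S1 S2 : S1 \subset S2 -> hasSep S2 -> m S1 <= m S2.
Proof.
move=> sub /m_ex [K [sK dK ->]]; apply: m_le sK _; exact: disjointWr dK.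
Qed.

Section Main.
Variable S : {set T}.
Hypothesis sNX : sep (N X).
Hypothesis HS : S \subset N X.
Hypothesis HSY : forall s y, s \in S -> y \in Y -> ~~ e s y.

Lemma hasSep_sub S' : S' \subset S -> hasSep S'.
Proof.
move=> sub; apply: sep_avoid => //; first exact: subset_trans sub HS.
by move=> s y sS yY; apply: HSY => //; exact: (subsetP sub).
Qed.

Lemma IW_sub S' : S' \subset S -> exists K, important_witness e X Y S' K.
Proof. move=> sub; apply: IW_ex; [exact: subset_trans sub HS | exact: hasSep_sub]. Qed.

Lemma strict S' K s : S' \subset S -> important_witness e X Y S' K -> s \in K -> s \in S ->
  m S' < m (s |: S').
Proof.
move=> sub IWK sK sS.
have sub2 : s |: S' \subset S by rewrite subUset sub sub1set sS.
have hex2 := hasSep_sub sub2; have hex1 := hasSep_sub sub.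
have mono := m_mono (subsetUr [set s] S') hex2.
rewrite ltn_neqAle mono andbT; apply/negP => /eqP Em.
have [K2 H2] := IW_sub sub2.
have W2 : important_witness e X Y S' K2.
  move: H2; rewrite /important_witness !witnessE //.
  case/andP => /and3P [s2 d2 /eqP c2] ->; rewrite s2 /= andbT Em c2 eqxx andbT.
  exact: disjointWr (subsetUr _ _) d2.
have EK := IW_uniq W2 IWK.
move: H2; rewrite /important_witness witnessE // EK => /andP [/and3P [_ d _] _].
by move: (disjointFr d sK); rewrite !inE eqxx.
Qed.

Lemma main_ind n : forall S', S' \subset S -> #|S'| + rmin e X Y <= m S' -> m S - m S' <= n ->
  exists S'', exists K, [/\ S'' \subset S, #|S''| + rmin e X Y <= m S,
     important_witness e X Y S'' K & important_witness e X Y S K].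
Proof.
elim: n => [|n IH] S' sub hc hn.
all: have [K IWK] := IW_sub sub.
all: have hex1 := hasSep_sub sub; have hexS := hasSep_sub (subxx S).
all: have mS := m_mono sub hexS.
all: case dKS: [disjoint K & S].
all: try (exists S', K; split => //;
  [ exact: leq_trans hc mS
  | move: (IWK); rewrite /important_witness !witnessE // => /andP [/and3P [s1 d1 /eqP c1] ->];
    rewrite s1 dKS /= andbT; apply/eqP; apply/eqP; rewrite eqn_leq (m_le s1 dKS) andbT c1 //]).
all: have [s sK sS] : exists2 s, s \in K & s \in S
  by move: (negbT dKS); rewrite disjoint_subset => /subsetPn [s h1 h2];
     exists s => //; move: h2; rewrite !inE negbK.
all: have sub2 : s |: S' \subset S by rewrite subUset sub sub1set sS.
all: have lt := strict sub IWK sK sS.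
all: have mS2 := m_mono sub2 hexS.
- by move: hn lt mS2; clear; lia.
have sS' : s \notin S'.
  by apply/negP => h; move: IWK => /andP [/and3P [_ d _] _]; rewrite (disjointFl d h) in sK.
apply: (IH (s |: S')) => //.
  by rewrite cardsU1 sS' /=; move: hc lt; clear; lia.
by move: hn lt mS2; clear; lia.
Qed.
End Main.
End G.

Theorem lemma4 (T : finType) (e : rel T) (X Y : {set T})
  (e_sym : symmetric e) (e_irr : irreflexive e) (XY : [disjoint X & Y])
  (Hnorm : normalized e X Y)
  (S : {set T}) (HS : S \subset nbrs e X)
  (HSY : forall s y, s \in S -> y \in Y -> ~~ e s y) :
  exists2 S' : {set T}, S' \subset S &
    (#|S'| <= CE e X Y S) /\ Kof e X Y S' = Kof e X Y S.
Proof.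
have sNX : separator e X Y (nbrs e X).
  by move: Hnorm => /forallP /(_ (nbrs e X)); rewrite eqxx => /eqP /andP [].
have sub0 : set0 \subset S by exact: sub0set.
have [K0 [s0 d0 h0]] := m_ex (hasSep_sub e_sym XY sNX HS HSY sub0).
have hc : #|(set0 : {set T})| + rmin e X Y <= m e X Y set0.
  by rewrite cards0 add0n h0; exact: rmin_le s0.
have [S'' [K [sub hS'' I1 I2]]] := @main_ind T e X Y e_sym XY S sNX HS HSY (m e X Y S) set0 sub0 hc (leq_subr _ _).
exists S'' => //; split; last by rewrite (Kof_eq e_sym XY I1) (Kof_eq e_sym XY I2).
rewrite /CE -/(m e X Y S); move: hS''; clear; lia.
Qed.
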